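(* Let $(X,d)$ be a complete metric space and let $\{T_i\}_{i\in\mathbb{N}}$ be a sequence of continuous maps $T_i:X\to X$ having a compact invariant domain $C\subseteq X$ (i.e. $T_i(x)\in C$ for all $x\in C$ and all $i\in\mathbb{N}$). Suppose $T_i$ converges uniformly on $C$ to a map $T$, where $T$ is a $\phi$-contraction with a comparison function $\phi$. Then for every $x\in C$ the forward trajectory $\Phi_k(x)=T_k\circ T_{k-1}\circ\cdots\circ T_1(x)$ converges to the fixed point $p$ of $T$, i.e. $\lim_{k\to\infty} d(\Phi_k(x),p)=0$.
   Context: A comparison function is a non-decreasing map $\phi:[0,\infty)\to[0,\infty)$ such that $\phi^p(t)\to 0$ as $p\to\infty$ for every $t\ge 0$, where $\phi^p$ denotes the $p$-fold composition of $\phi$. A map $T:X\to X$ is a $\phi$-contraction if $d(T(x),T(y))\le\phi(d(x,y))$ for all $x,y\in X$; such a map on a complete metric space has a unique fixed point. *)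

(* Defs.v *)
From Stdlib Require Import Reals Lra List.
Open Scope R_scope.

Section MetricDefs.
Variable M : Metric_Space.
Notation X := (Base M).
Notation d := (dist M).

Definition cauchy_seq (u : nat -> X) : Prop :=
  forall eps, 0 < eps -> exists N, forall m n, (N <= m)%nat -> (N <= n)%nat ->
    d (u m) (u n) < eps.

Definition seq_converges (u : nat -> X) (l : X) : Prop :=
  forall eps, 0 < eps -> exists N, forall n, (N <= n)%nat -> d (u n) l < eps.

Definition complete_space : Prop :=
  forall u : nat -> X, cauchy_seq u -> exists l, seq_converges u l.

Definition open_set (U : X -> Prop) : Prop :=
  forall x, U x -> exists r, 0 < r /\ forall y, d x y < r -> U y.

Definition compact_set (C : X -> Prop) : Prop :=
  forall (I : Type) (U : I -> X -> Prop),
    (forall i, open_set (U i)) ->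
    (forall x, C x -> exists i, U i x) ->
    exists l : list I, forall x, C x -> exists i, In i l /\ U i x.

Definition continuous_map (f : X -> X) : Prop :=
  forall x eps, 0 < eps -> exists delta, 0 < delta /\
    forall y, d x y < delta -> d (f x) (f y) < eps.

Definition invariant_domain (Ts : nat -> X -> X) (C : X -> Prop) : Prop :=
  forall i x, C x -> C (Ts i x).

Definition unif_conv_on (Ts : nat -> X -> X) (T : X -> X) (C : X -> Prop) : Prop :=
  forall eps, 0 < eps -> exists N, forall n x, (N <= n)%nat -> C x ->
    d (Ts n x) (T x) < eps.

Definition phi_contraction (phi : R -> R) (T : X -> X) : Prop :=
  forall x y, d (T x) (T y) <= phi (d x y).

Fixpoint trajectory (Ts : nat -> X -> X) (k : nat) (x : X) : X :=
  match k with
  | O => x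
  | S k' => Ts (S k') (trajectory Ts k' x)
  end.

End MetricDefs.

Definition comparison_function (phi : R -> R) : Prop :=
  (forall t, 0 <= t -> 0 <= phi t) /\
  (forall s t, 0 <= s -> s <= t -> phi s <= phi t) /\
  (forall t, 0 <= t -> Un_cv (fun p => Nat.iter p phi t) 0).

(* Main.v *)
Require Import Defs.
From Stdlib Require Import Reals.
From Stdlib Require Import Lra Lia List Classical ZArith.
Open Scope R_scope.

Lemma iter_ge (phi : R -> R) t :
  (forall t, 0 <= t -> 0 <= phi t) ->
  (forall s t, 0 <= s -> s <= t -> phi s <= phi t) ->
  0 <= t -> t <= phi t -> forall n, t <= Nat.iter n phi t.
Proof.
  intros h0 hm ht hle n; induction n as [|n IH]; simpl; [lra|].
  assert (phi t <= phi (Nat.iter n phi t)) by (apply hm; lra). lra.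
Qed.

Lemma phi_lt phi : comparison_function phi -> forall t, 0 < t -> phi t < t.
Proof.
  intros [h0 [hm hc]] t ht.
  destruct (Rlt_or_le (phi t) t) as [H|H]; auto.
  exfalso. destruct (hc t (Rlt_le _ _ ht) t ht) as [N HN].
  specialize (HN N (le_n N)). unfold Rdist in HN.
  pose proof (iter_ge phi t h0 hm (Rlt_le _ _ ht) H N).
  rewrite Rminus_0_r, Rabs_right in HN by lra. lra.
Qed.

Lemma phi_le phi : comparison_function phi -> forall t, 0 <= t -> phi t <= t.
Proof.
  intros hc t ht. destruct (Req_dec t 0) as [->|Hn].
  - destruct (Rle_or_lt (phi 0) 0) as [H|H]; auto. exfalso.
    destruct hc as [h0 [hm hc']].
    assert (phi 0 <= phi (phi 0)) by (apply hm; lra).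
    pose proof (phi_lt phi (conj h0 (conj hm hc')) (phi 0) H). lra.
  - left. apply phi_lt; auto; lra.
Qed.

Lemma list_min {I : Type} (l : list I) (P : I -> Prop) (f : I -> R) :
  (forall i, P i -> 0 < f i) ->
  exists eta, 0 < eta /\ forall i, In i l -> P i -> eta <= f i.
Proof.
  intros hp; induction l as [|a l [eta [he H]]].
  - exists 1; split; [lra|]; intros i [].
  - destruct (classic (P a)) as [Pa|nPa].
    + exists (Rmin eta (f a)). split.
      * apply Rmin_glb_lt; auto.
      * intros i [<-|Hi] Pi. apply Rmin_r.
        eapply Rle_trans; [apply Rmin_l|]; auto.
    + exists eta; split; auto. intros i [<-|Hi] Pi; [contradiction|auto].
Qed.

Theorem proposition3p10 (M : Metric_Space) (Ts : nat -> Base M -> Base M)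
  (C : Base M -> Prop) (T : Base M -> Base M) (phi : R -> R) :
  complete_space M ->
  (forall i, continuous_map M (Ts i)) ->
  compact_set M C ->
  invariant_domain M Ts C ->
  unif_conv_on M Ts T C ->
  comparison_function phi ->
  phi_contraction M phi T ->
  forall p : Base M, T p = p ->
  forall x : Base M, C x ->
    Un_cv (fun k => dist M (trajectory M Ts k x) p) 0.
Proof.
  intros _ _ hcomp hinv hunif hphi hcon p hp x hx.
  set (d := dist M).
  assert (dpos : forall a b, 0 <= d a b) by (intros; apply Rge_le, dist_pos).
  assert (dsym : forall a b, d a b = d b a) by (intros; apply dist_sym).
  assert (dtri : forall a b c, d a b <= d a c + d c b) by (intros; apply dist_tri).
  assert (drefl : forall a, d a a = 0) by (intros; apply dist_refl; auto).
  assert (nexp : forall a b, d (T a) (T b) <= d a b).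
  { intros a b. eapply Rle_trans; [apply hcon|]. apply phi_le; auto. }
  set (g := fun z => d z p - d (T z) p).
  assert (gpos : forall z, 0 < d z p -> 0 < g z).
  { intros z hz. unfold g. rewrite <- hp at 2.
    pose proof (hcon z p). pose proof (phi_lt phi hphi _ hz).
    fold d in H. lra. }
  assert (gnn : forall z, 0 <= g z).
  { intros z. unfold g. rewrite <- hp at 2. pose proof (nexp z p). lra. }
  assert (gap : forall delta, 0 < delta -> exists eta, 0 < eta /\
            forall z, C z -> delta <= d z p -> eta <= g z).
  { intros delta hdel.
    set (U := fun (i : option (Base M)) (z : Base M) =>
                match i with
                | None => d z p < delta
                | Some y => d y z < g y / 4 end).
    assert (Uopen : forall i : option (Base M), Defs.open_set M (U i)).
    { intros [y|] z hz; simpl in hz.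
      - exists (g y / 4 - d y z). split; [lra|]. intros w hw. simpl.
        pose proof (dtri y w z). fold d in hw. lra.
      - exists (delta - d z p). split; [lra|]. intros w hw. simpl.
        pose proof (dtri w p z). rewrite (dsym w z) in H. fold d in hw. lra. }
    assert (Ucov : forall z, C z -> exists i, U i z).
    { intros z hz. destruct (Rlt_or_le (d z p) delta) as [H|H].
      - exists None; simpl; auto.
      - exists (Some z); simpl. rewrite drefl.
        pose proof (gpos z ltac:(lra)). lra. }
    destruct (hcomp _ U Uopen Ucov) as [l Hl].
    destruct (list_min l (fun i => match i with None => False | Some y => 0 < g y end)
               (fun i => match i with None => 1 | Some y => g y / 2 end)) as [eta [he Heta]].
    { intros [y|] H; simpl in *; lra. }
    exists eta; split; auto. intros z hz hzd.
    destruct (Hl z hz) as [[y|] [Hin Hu]]; simpl in Hu; [|lra].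
    pose proof (dpos y z).
    assert (0 < g y) by lra.
    specialize (Heta (Some y) Hin H0). simpl in Heta.
    pose proof (dtri y p z). pose proof (dtri (T z) p (T y)).
    pose proof (nexp z y). rewrite (dsym z y) in H3.
    unfold g in *. lra. }
  set (a := fun k => d (trajectory M Ts k x) p).
  assert (inC : forall k, C (trajectory M Ts k x)).
  { induction k; simpl; auto. }
  intros eps heps.
  set (delta := eps / 2). assert (hdelta : 0 < delta) by (unfold delta; lra).
  destruct (gap delta ltac:(unfold delta; lra)) as [eta [he Hg]].
  destruct (hunif (Rmin (eta/2) delta)) as [N HN].
  { apply Rmin_glb_lt; unfold delta; lra. }
  pose proof (Rmin_l (eta/2) delta). pose proof (Rmin_r (eta/2) delta).
  set (ep := Rmin (eta/2) delta) in *.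
  assert (step : forall k, (N <= k)%nat ->
     a (S k) < delta + a k /\ (delta <= a k -> a (S k) <= a k - eta / 2)).
  { intros k hk. unfold a. simpl.
    set (y := trajectory M Ts k x).
    pose proof (HN (S k) y ltac:(lia) (inC k)). fold d in H1.
    pose proof (dtri (Ts (S k) y) p (T y)).
    pose proof (gnn y). unfold g in H3.
    split; [lra|]. intros hd. pose proof (Hg y (inC k) hd). unfold g in H4. lra. }
  assert (reach : forall j, (exists k, (N <= k)%nat /\ a k < 2 * delta) \/
                            a (N + j)%nat <= a N - INR j * (eta / 2)).
  { induction j as [|j [IH|IH]]; [right; rewrite Nat.add_0_r; simpl; lra|left; auto|].
    destruct (Rlt_or_le (a (N + j)%nat) (2 * delta)) as [H1|H1].
    - left. exists (N + j)%nat; split; [lia|auto].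
    - right. replace (N + S j)%nat with (S (N + j)) by lia.
      destruct (step (N + j)%nat ltac:(lia)) as [_ H2].
      rewrite S_INR. specialize (H2 ltac:(lra)). lra. }
  destruct (archimed (a N / (eta / 2))) as [Hup _].
  assert (hz : (0 <= up (a N / (eta / 2)))%Z).
  { apply le_IZR. pose proof (dpos (trajectory M Ts N x) p).
    assert (0 <= a N / (eta/2)) by (unfold Rdiv; apply Rmult_le_pos; [unfold a; lra | left; apply Rinv_0_lt_compat; lra]). lra. }
  destruct (reach (Z.to_nat (up (a N / (eta / 2))))) as [[K [HK1 HK2]]|Hc].
  2:{ exfalso. rewrite INR_IZR_INZ, Z2Nat.id in Hc by auto.
      assert (IZR (up (a N / (eta / 2))) * (eta / 2) > a N).
      { apply Rmult_lt_reg_r with (r := / (eta/2)).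
        apply Rinv_0_lt_compat; lra.
        rewrite Rmult_assoc, Rinv_r, Rmult_1_r by lra. exact Hup. }
      pose proof (dpos (trajectory M Ts (N + Z.to_nat (up (a N / (eta / 2))))%nat x) p).
      unfold a in *. lra. }
  exists K. intros n hn.
  assert (forall m, a (K + m)%nat < 2 * delta).
  { induction m as [|m IHm]; [rewrite Nat.add_0_r; auto|].
    replace (K + S m)%nat with (S (K + m)) by lia.
    destruct (step (K + m)%nat ltac:(lia)) as [H1 H2].
    destruct (Rlt_or_le (a (K + m)%nat) delta) as [H3|H3].
    - lra.
    - specialize (H2 H3). lra. }
  specialize (H1 (n - K)%nat). replace (K + (n - K))%nat with n in H1 by lia.
  unfold Rdist. rewrite Rminus_0_r, Rabs_right.
  - unfold a in *. unfold delta in H1. lra.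
  - apply Rle_ge, dpos.
Qed.
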